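(* Let $m\ge2$, $K$ an algebraic number field, $a(z)\in K[z]$ monic of degree $m$, $b(z)\in K[z]$ of degree $\le m-1$ with $z^{m-1}$-coefficient $b_{m-1}$, with $a(z)=\prod_{i=1}^m(z-\alpha_i)$, $\alpha_i\in K$ pairwise distinct, $s_i:=b(\alpha_i)/a'(\alpha_i)\in\mathbb{Q}\setminus\mathbb{Z}_{\le-1}$, $b_{m-1}\notin\mathbb{Z}_{<-1}$. Let $v$ be a non-Archimedean place of $K$ and $n$ a positive integer. Then \[\log\max_{0\le\ell\le m}\{\|P_{n,\ell}\|_v\}\le\sum_{i=1}^m\bigl(\log|\mu_n(s_i)|_v^{-1}+n\,\mathrm{h}_v(\alpha_i)\bigr).\]
   Context: $P_{n,\ell}(z)=\frac1{n!}(\frac{d}{dz}+\frac{b(z)}{a(z)})^n(a(z)^nz^\ell)$ (operator applied $n$ times; a polynomial). For $R=\sum_kr_kz^k$, $\|R\|_v=\max_k|r_k|_v$. Absolute values normalized: $|p|_v=p^{-[K_v:\mathbb{Q}_p]/[K:\mathbb{Q}]}$ for $v\mid p$; $\mathrm{h}_v(\alpha)=\log\max\{1,|\alpha|_v\}$. For $s\in\mathbb{Q}$, $\mu_n(s)=\mathrm{den}(s)^n\prod_{q\text{ prime},\,q\mid\mathrm{den}(s)}q^{\lfloor n/(q-1)\rfloor}$. *)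

(* Defs.v *)
From HB Require Import structures.
From mathcomp Require Import all_boot all_order all_algebra all_field.
From mathcomp Require Import all_classical all_reals all_analysis.
Set Implicit Arguments. Unset Strict Implicit. Unset Printing Implicit Defensive.
Import Order.TTheory GRing.Theory Num.Theory.
Local Open Scope ring_scope.

(* A non-Archimedean (ultrametric), nontrivial absolute value on a field K,
   real-valued.  A non-Archimedean place v of a number field is represented by
   such an absolute value (any representative). *)
Definition nonarch_abs (K : fieldType) (R : realType) (v : K -> R) : Prop :=
  [/\ v 0 = 0,
      (forall x, x != 0 -> 0 < v x),
      (forall x y, v (x * y) = v x * v y),
      (forall x y, v (x + y) <= Num.max (v x) (v y))
    & exists x, x != 0 /\ v x != 1].

(* one application of  d/dz + b/a  to a polynomial Q (divisible by a):
   Q |-> Q' + b Q / a  (the division is exact in all uses below) *)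
Definition Dba (K : fieldType) (a b : {poly K}) (Q : {poly K}) : {poly K} :=
  Q^`() + (b * Q) %/ a.

Definition Pnl (K : fieldType) (a b : {poly K}) (n l : nat) : {poly K} :=
  (n`!%:R)^-1 *: iter n (Dba a b) (a ^+ n * 'X^l).

Definition normv (K : fieldType) (R : realType) (v : K -> R) (P : {poly K}) : R :=
  \big[Num.max/0]_(k < size P) v P`_k.

Definition hv (K : fieldType) (R : realType) (v : K -> R) (x : K) : R :=
  ln (Num.max 1 (v x)).

Definition mu (n : nat) (s : rat) : nat :=
  let d := absz (denq s) in
  (d ^ n * \prod_(q <- primes d) q ^ (n %/ q.-1))%N.

(* Main.v *)
Require Import Defs.
From HB Require Import structures.
From mathcomp Require Import all_boot all_order all_algebra all_field.
From mathcomp Require Import all_classical all_reals all_analysis.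
From mathcomp Require Import zify ring lra.
Import Order.TTheory GRing.Theory Num.Theory.
Local Open Scope ring_scope.

Lemma legendre_aux p k N : prime p ->
  (p.-1 * (\sum_(1 <= i < N.+1) k %/ p ^ i) + k %/ p ^ N <= k)%N.
Proof.
move=> pp; elim: N => [|N IH]; first by rewrite big_geq // muln0 expn0 divn1.
rewrite big_nat_recr //= mulnDr -addnA; apply: leq_trans IH.
rewrite leq_add2l expnSr divnMA.
set y := (k %/ p ^ N)%N.
have: (y %/ p * p <= y)%N by apply: leq_trunc_div.
have p0: (0 < p)%N by apply: prime_gt0.
move: (y %/ p)%N (prednK p0) => z; move: (p.-1) => q <-; nia.
Qed.

Lemma legendre p k : prime p -> (p.-1 * logn p k`! <= k)%N.
Proof.
move=> pp; rewrite logn_fact //.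
exact: leq_trans (leq_addr _ _) (legendre_aux p k k pp).
Qed.

Lemma legendre2 p k n : prime p -> (k <= n)%N -> (logn p k`! <= n %/ p.-1)%N.
Proof.
move=> pp kn; have p1: (0 < p.-1)%N by rewrite -ltnS prednK ?prime_gt1 ?prime_gt0.
rewrite leq_divRL // mulnC; exact: leq_trans (legendre p k pp) kn.
Qed.

Lemma dvdz_prod_sub (Q : int) (k : nat) (a b : nat -> int) :
  (forall t, (t < k)%N -> (Q %| a t - b t)%Z) ->
  (Q %| \prod_(t < k) a t - \prod_(t < k) b t)%Z.
Proof.
elim: k => [|k IH] H; first by rewrite !big_ord0 subrr dvdz0.
rewrite !big_ord_recr /=.
have -> : (\prod_(i < k) a i) * a k - (\prod_(i < k) b i) * b k =
   (\prod_(i < k) a i - \prod_(i < k) b i) * a k + (\prod_(i < k) b i) * (a k - b k).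
  by rewrite mulrBl mulrBr addrA subrK.
apply: rpredD; first by apply: dvdz_mulr; apply: IH => t tk; apply: H; apply: ltnW.
by apply: dvdz_mull; apply: H.
Qed.

Lemma dvd_prod_shift (Q d : nat) (c : int) k : (0 < Q)%N -> coprime Q d ->
  (Q %| k`!)%N -> ((Q%:Z) %| \prod_(t < k) (c - t%:R * d%:R))%Z.
Proof.
move=> Q0 cQd Qk.
have [u [w Huw]] := Bezoutz (d%:Z) (Q%:Z).
have g1 : gcdz d%:Z Q%:Z = 1 by rewrite /gcdz /=; rewrite coprime_sym in cQd; rewrite (eqP cQd).
rewrite g1 in Huw.
pose x : nat := (`|((u * c) %% Q)%Z|%N + Q * k)%N.
have Qn0 : (Q%:Z) != 0 by rewrite eqz_nat -lt0n.
have hx : (Q%:Z %| x%:Z - u*c)%Z.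
  rewrite /x PoszD PoszM gez0_abs ?modz_ge0 //.
  rewrite {2}(divz_eq (u*c) Q).
  apply/dvdzP; exists (k%:Z - ((u * c) %/ Q)%Z); ring.
have hdx : (Q%:Z %| d%:Z * x%:Z - c)%Z.
  have -> : d%:Z * x%:Z - c = d%:Z * (x%:Z - u * c) + (u * d%:Z + w * Q%:Z - 1) * c - w * c * Q%:Z by ring.
  rewrite Huw subrr mul0r addr0; apply: rpredB; first by apply: dvdz_mull.
  by apply: dvdz_mull; apply: dvdzz.
have hab : forall t, (t < k)%N -> (Q%:Z %| (fun t : nat => d%:Z * (x%:Z - t%:R)) t - (fun t : nat => c - t%:R * d%:R) t)%Z.
  move=> t _ /=; have -> : d%:Z * (x%:Z - t%:R) - (c - t%:R * d%:R) = d%:Z * x%:Z - c by ring.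
  exact: hdx.
have hP := dvdz_prod_sub (Q%:Z) k _ _ hab.
rewrite big_split /= prodr_const card_ord in hP.
have kx : (k <= x)%N by rewrite /x; apply: leq_trans (leq_addl _ _); apply: leq_pmull.
have E : \prod_(i < k) ((x%:Z) - i%:R) = (x ^_ k)%:R.
  by rewrite ffact_prod natr_prod; apply: eq_bigr => t _; rewrite natrB //; move: (ltn_ord t); lia.
rewrite E in hP.
have hX : (Q%:Z %| (x ^_ k)%:R)%Z.
  rewrite natz dvdzE /=; apply: dvdn_trans Qk _; rewrite -bin_ffact; exact: dvdn_mull.
have -> : \prod_(t < k) (c - t%:R * d%:R) = d%:Z ^+ k * (x ^_ k)%:R - (d%:Z ^+ k * (x ^_ k)%:R - \prod_(t < k) (c - t%:R * d%:R)) by ring.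
by apply: rpredB => //; apply: dvdz_mull.
Qed.

Lemma mu_binom (s : rat) (n k : nat) : (k <= n)%N ->
  exists z : int, ((mu n s)%:R : rat) * \prod_(t < k) (n%:R + s - t%:R) = k`!%:R * z%:~R.
Proof.
move=> kn.
set d := `|denq s|%N.
have d0 : (0 < d)%N by rewrite /d absz_gt0 gt_eqF ?denq_gt0.
have hd : denq s = d%:Z by rewrite /d gtz0_abs ?denq_gt0.
set c' := numq s + n%:Z * d%:Z.
set E := (\prod_(q <- primes d) q ^ (n %/ q.-1))%N.
have key : (k`!%:Z %| E%:Z * \prod_(t < k) (c' - t%:R * d%:R))%Z.
  rewrite dvdzE abszM /=.
  apply/dvdn_partP; first exact: fact_gt0.
  move=> p pin; rewrite p_part.
  have pp : prime p by move: pin; rewrite mem_primes => /andP[].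
  case: (boolP (p \in primes d)) => pd.
    apply: dvdn_mulr; apply: (@dvdn_trans (p ^ (n %/ p.-1))).
      by rewrite dvdn_exp2l // legendre2.
    by rewrite /E (bigD1_seq p) //= ?primes_uniq //; apply: dvdn_mulr.
  apply: dvdn_mull.
  have cp : coprime (p ^ logn p k`!) d.
    rewrite coprimeXl // prime_coprime //; move: pd; rewrite mem_primes pp d0 /=; by [].
  have pg : (0 < p ^ logn p k`!)%N by rewrite expn_gt0 prime_gt0.
  have := dvd_prod_shift (p ^ logn p k`!) d c' k pg cp (pfactor_dvdnn _ _).
  by rewrite dvdzE.
have [z' Hz] := dvdzP key.
exists ((d ^ (n - k))%:Z * z').
have hs : s = (numq s)%:~R / d%:R by rewrite -[X in X = _]divq_num_den hd.
have ht : forall t : 'I_k, (n%:R + s - t%:R : rat) = (c' - t%:R * d%:R)%:~R / d%:R.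
  move=> t; rewrite {1}hs /c' !(rmorphB, rmorphD, rmorphM) /= !rmorph_nat.
  rewrite (_ : ((n%:Z)%:~R : rat) = n%:R) // (_ : ((d%:Z)%:~R : rat) = d%:R) //.
  have : (d%:R : rat) != 0 by rewrite pnatr_eq0 -lt0n.
  move=> dn0; field.
  by [].
rewrite (eq_bigr _ (fun t _ => ht t)) prodf_div prodr_const card_ord -rmorph_prod /=.
have := congr1 (fun z : int => (z%:~R : rat)) Hz.
rewrite /= rmorphM rmorphM /= => HH.
rewrite /mu -/d -/E natrM mulrAC -mulrA.
rewrite [X in _ * X = _](_ : _ = (z'%:~R * k`!%:R) / (d%:R ^+ k)); last first.
  by rewrite mulrAC [X in X / _]mulrC; congr (_ / _); exact: HH.
have : (d%:R : rat) != 0 by rewrite pnatr_eq0 -lt0n.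
move=> dn0.
have dn : (d%:R : rat) ^+ n = d%:R ^+ (n - k) * d%:R ^+ k by rewrite -exprD subnK.
rewrite natrX dn rmorphM /=.
rewrite (_ : (((d ^ (n - k))%N%:Z)%:~R : rat) = (d ^ (n - k))%:R) // natrX.
field.
by rewrite expf_neq0.
Qed.


Section Rr.
Variable K : fieldType.

Fixpoint Rr (A bA F : {poly K}) (N : K) (k : nat) : {poly K} :=
  if k is k'.+1 then
    let P := Rr A bA F N k' in A * P^`() + ((N - k'%:R) *: A^`() + bA) * P
  else F.

Lemma mul_deriv_exp (A : {poly K}) e : A * (A ^+ e)^`() = A^`() * A ^+ e *+ e.
Proof.
rewrite deriv_exp; case: e => [|e]; first by rewrite !mulr0n mulr0.
by rewrite /= exprS -!mulrnAr mulrCA.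
Qed.

Definition Tt A B bA bB F G N e1 e2 :=
  A ^+ e1 * B ^+ e2 * Rr A bA F N e2 * Rr B bB G N e1.

Lemma Tt_step A B bA bB F G N e1 e2 :
  (A * B) * (Tt A B bA bB F G N e1 e2)^`() +
  ((N - (e1 + e2)%:R) *: (A * B)^`() + (bA * B + bB * A)) * Tt A B bA bB F G N e1 e2
  = Tt A B bA bB F G N e1 e2.+1 + Tt A B bA bB F G N e1.+1 e2.
Proof.
rewrite /Tt /= !exprS.
set P := Rr A bA F N e2; set Q := Rr B bB G N e1.
rewrite !derivM.
have hA := mul_deriv_exp A e1; have hB := mul_deriv_exp B e2.
rewrite -!mul_polyC !rmorphB /= !polyC_natr.
move: hA hB; set X1 := (A ^+ e1)^`(); set Y1 := (B ^+ e2)^`() => hA hB.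
rewrite -mulr_natr in hA; rewrite -mulr_natr in hB.
move: hA hB; set Ae := A ^+ e1; set Be := B ^+ e2 => hA hB.
rewrite !natrD.
apply/eqP; rewrite -subr_eq0; apply/eqP.
transitivity (B*Be*P*Q*(A*X1 - A^`()*Ae*e1%:R) + A*Ae*P*Q*(B*Y1 - B^`()*Be*e2%:R)).
  ring.
by rewrite hA hB !subrr !mulr0 addr0.
Qed.

Lemma deriv_sum_ord n (f : 'I_n -> {poly K}) : (\sum_(i < n) f i)^`() = \sum_(i < n) (f i)^`().
Proof. by elim/big_ind2: _ => //; [rewrite deriv0 | move=> x1 x2 y1 y2 <- <-; rewrite derivD]. Qed.

Lemma Rr_mul A B bA bB F G N j :
  Rr (A * B) (bA * B + bB * A) (F * G) N j =
  \sum_(k < j.+1) 'C(j, k)%:R *: Tt A B bA bB F G N (j - k) k.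
Proof.
elim: j => [|j IH].
  by rewrite big_ord1 /= /Tt /= bin0 scale1r !expr0 !mul1r.
rewrite /= IH deriv_sum_ord mulr_sumr mulr_sumr -big_split /=.
rewrite (eq_bigr (fun k : 'I_j.+1 => 'C(j, k)%:R *: (Tt A B bA bB F G N (j - k) k.+1 + Tt A B bA bB F G N (j - k).+1 k))); last first.
  move=> k _; rewrite derivZ -scalerAr -scalerAr -scalerDr; congr (_ *: _).
  by rewrite -Tt_step subnK // -ltnS.
rewrite (eq_bigr _ (fun i _ => scalerDr _ _ _)) big_split /=.
rewrite [in RHS]big_ord_recl /= subn0 bin0 scale1r.
rewrite [in RHS](eq_bigr (fun i : 'I_j.+1 => 'C(j, i)%:R *: Tt A B bA bB F G N (j - i) i.+1 + 'C(j, i.+1)%:R *: Tt A B bA bB F G N (j - i) i.+1)); last first.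
  by move=> i _; rewrite /bump /= add1n binS natrD scalerDl subSS addrC.
rewrite big_split /= addrCA; congr (_ + _).
rewrite big_ord_recl /= subn0 bin0 scale1r; congr (_ + _).
rewrite big_ord_recr /= bin_small // scale0r addr0.
by apply: eq_bigr => i _; rewrite /bump /= add1n subnSK.
Qed.
End Rr.
Arguments Rr {K}. Arguments Tt {K}.


Section Val.
Variables (K : fieldType) (R : realType) (v : K -> R).
Hypothesis Hv : nonarch_abs v.

Lemma v0 : v 0 = 0. Proof. by case: Hv. Qed.
Lemma vM x y : v (x * y) = v x * v y. Proof. by case: Hv => _ _ H _ _; apply: H. Qed.
Lemma vD x y : v (x + y) <= Num.max (v x) (v y). Proof. by case: Hv => _ _ _ H _; apply: H. Qed.
Lemma vgt0 x : x != 0 -> 0 < v x. Proof. by case: Hv => _ H _ _ _; apply: H. Qed.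
Lemma vge0 x : 0 <= v x.
Proof. by have [->|/vgt0/ltW //] := eqVneq x 0; rewrite v0. Qed.
Lemma v1 : v 1 = 1.
Proof.
have h := vM 1 1; rewrite mulr1 in h.
have p : 0 < v 1 by apply: vgt0; exact: oner_neq0.
have : v 1 * (v 1 - 1) = 0 by rewrite mulrBr mulr1 -h subrr.
by move/eqP; rewrite mulf_eq0 gt_eqF //= subr_eq0 => /eqP.
Qed.
Lemma vN1 : v (-1) = 1.
Proof.
have h := vM (-1) (-1); rewrite mulrNN mulr1 v1 in h.
have p : 0 < v (-1) by apply: vgt0; rewrite oppr_eq0 oner_neq0.
have : (v (-1) - 1) * (v (-1) + 1) = 0 by rewrite mulrDr mulr1 mulrBl -h; ring.
move/eqP; rewrite mulf_eq0 => /orP[]; first by rewrite subr_eq0 => /eqP.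
by move=> /eqP h2; exfalso; move: p; rewrite -[v (-1)]addr0 -(subrr 1) addrA h2; lra.
Qed.
Lemma vN x : v (- x) = v x.
Proof. by rewrite -mulN1r vM vN1 mul1r. Qed.
Lemma vB_le x y c : v x <= c -> v y <= c -> v (x + y) <= c.
Proof. move=> hx hy; apply: le_trans (vD x y) _; by rewrite ge_max hx hy. Qed.
Lemma vnat n : v n%:R <= 1.
Proof.
elim: n => [|n IH]; first by rewrite v0.
by rewrite -addn1 natrD; apply: vB_le => //; rewrite v1.
Qed.
Lemma vint (z : int) : v z%:~R <= 1.
Proof. case: z => n; [exact: vnat | rewrite NegzE rmorphN vN; exact: vnat]. Qed.
Lemma vV x : x != 0 -> v (x^-1) = (v x)^-1.
Proof.
move=> x0; have vx0 : v x != 0 by rewrite gt_eqF // vgt0.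
by apply: (mulfI vx0); rewrite -vM !mulfV // v1.
Qed.
Lemma vprod I (r : seq I) (f : I -> K) : v (\prod_(i <- r) f i) = \prod_(i <- r) v (f i).
Proof. by elim: r => [|i r IH]; rewrite ?big_nil ?v1 // !big_cons vM IH. Qed.
Lemma vsum I (r : seq I) (f : I -> K) c : 0 <= c -> (forall i, v (f i) <= c) -> v (\sum_(i <- r) f i) <= c.
Proof. by move=> c0 h; elim: r => [|i r IH]; rewrite ?big_nil ?v0 // big_cons vB_le. Qed.

Definition cb (P : {poly K}) (c : R) := forall i, v P`_i <= c.

Lemma cb_le P c c' : cb P c -> c <= c' -> cb P c'.
Proof. by move=> h le i; apply: le_trans (h i) le. Qed.
Lemma cb0 c : 0 <= c -> cb 0 c. Proof. by move=> c0 i; rewrite coef0 v0. Qed.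
Lemma cbD P Q c : cb P c -> cb Q c -> cb (P + Q) c.
Proof. by move=> hP hQ i; rewrite coefD vB_le. Qed.
Lemma cb_sum n (f : 'I_n -> {poly K}) c : 0 <= c -> (forall i, cb (f i) c) -> cb (\sum_(i < n) f i) c.
Proof.
move=> c0 h; elim/big_ind: _ => //; first exact: cb0.
by move=> x y; apply: cbD.
Qed.
Lemma cbZ P c x : cb P c -> cb (x *: P) (v x * c).
Proof. by move=> h i; rewrite coefZ vM ler_wpM2l ?vge0. Qed.
Lemma cbC x : cb x%:P (v x).
Proof. by move=> i; rewrite coefC; case: (i == 0%N); rewrite ?v0 ?vge0. Qed.
Lemma cb1 : cb 1 1. Proof. by have := cbC 1; rewrite v1. Qed.
Lemma cbM P Q c1 c2 : 0 <= c1 -> 0 <= c2 -> cb P c1 -> cb Q c2 -> cb (P * Q) (c1 * c2).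
Proof.
move=> c10 c20 hP hQ i; rewrite coefM; apply: vsum; first exact: mulr_ge0.
by move=> j; rewrite vM; apply: ler_pM; rewrite ?vge0.
Qed.
Lemma cbX P c e : 0 <= c -> cb P c -> cb (P ^+ e) (c ^+ e).
Proof.
move=> c0 h; elim: e => [|e IH]; first by rewrite !expr0; exact: cb1.
by rewrite !exprS; apply: cbM; rewrite ?exprn_ge0.
Qed.
Lemma cb_XsubC a : cb ('X - a%:P) (Num.max 1 (v a)).
Proof.
move=> i; rewrite coefB coefX coefC.
case: i => [|[|i]] /=; rewrite ?subr0 ?sub0r ?vN ?v1 ?v0 ?subrr ?le_max ?lexx ?orbT //.
by rewrite ler01.
Qed.


Variables (m : nat) (alpha : 'I_m -> K) (sK : 'I_m -> K) (beta : 'I_m -> R) (n : nat).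
Hypothesis beta_ge0 : forall i, 0 <= beta i.
Hypothesis hbeta : forall i k, (k <= n)%N ->
  v (\prod_(t < k) (n%:R - t%:R + sK i)) <= v (k`!%:R) * beta i.

Definition Ar (r : seq 'I_m) := \prod_(i <- r) ('X - (alpha i)%:P).
Fixpoint Br (w : 'I_m -> K) (r : seq 'I_m) : {poly K} :=
  if r is i :: r' then (w i)%:P * Ar r' + Br w r' * ('X - (alpha i)%:P) else 0.
Definition M i := Num.max 1 (v (alpha i)).

Lemma M_ge1 i : 1 <= M i. Proof. by rewrite le_max lexx. Qed.
Lemma M_ge0 i : 0 <= M i. Proof. exact: le_trans ler01 (M_ge1 i). Qed.

Lemma Rr_base (F : {poly K}) N k : Rr 1 0 F N k = F^`(k).
Proof.
elim: k => [|k IH] //=; by rewrite IH mul1r -polyC1 derivC scaler0 !add0r mul0r addr0.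
Qed.

Lemma Rr_lin (a s N : K) k : Rr ('X - a%:P) s%:P 1 N k = (\prod_(t < k) (N - t%:R + s))%:P.
Proof.
elim: k => [|k IH] /=; first by rewrite big_ord0.
rewrite IH derivC mulr0 add0r derivXsubC alg_polyC -rmorphD /= -rmorphM /=.
by rewrite big_ord_recr /= mulrC.
Qed.

Lemma cb_Ar r : cb (Ar r) (\prod_(i <- r) M i).
Proof.
elim: r => [|i r IH]; rewrite /Ar ?big_nil; first exact: cb1.
rewrite !big_cons; apply: cbM => //; first exact: M_ge0.
  by apply: prodr_ge0 => j _; apply: M_ge0.
exact: cb_XsubC.
Qed.


Lemma main_bound l r k : (k <= n)%N ->
  cb (Rr (Ar r) (Br sK r) 'X^l n%:R k)
     (v k`!%:R * \prod_(i <- r) beta i * (\prod_(i <- r) M i) ^+ k).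
Proof.
elim: r k => [|i r IH] k kn.
  rewrite /Ar big_nil /= Rr_base !big_nil mulr1 expr1n mulr1 => j.
  rewrite coef_derivn -[_ *+ ((k + j) ^_ k)]mulr_natr vM -bin_ffact natrM vM.
  have h1 : v (('X^l : {poly K})`_(k + j)) <= 1 by rewrite coefXn; apply: vnat.
  apply: le_trans (ler_pM (vge0 _) (mulr_ge0 (vge0 _) (vge0 _)) h1
     (ler_pM (vge0 _) (vge0 _) (vnat _) (lexx _))) _.
  by rewrite !mul1r.
rewrite /Ar big_cons -/(Ar r) /=.
rewrite -[X in Rr _ _ X](mul1r 'X^l) Rr_mul.
have PM0 : 0 <= \prod_(j <- r) M j by apply: prodr_ge0 => j _; apply: M_ge0.
have PB0 : 0 <= \prod_(j <- r) beta j by apply: prodr_ge0 => j _; apply: beta_ge0.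
apply: cb_sum.
  rewrite !big_cons; apply: mulr_ge0; last by apply: exprn_ge0; apply: mulr_ge0 => //; apply: M_ge0.
  by apply: mulr_ge0; [apply: vge0 | apply: mulr_ge0].
move=> kk; rewrite /Tt Rr_lin.
have kkk : (kk <= k)%N by rewrite -ltnS.
have hA := cbX _ _ (k - kk)%N (M_ge0 i) (cb_XsubC (alpha i)).
have hB := cbX _ _ kk PM0 (cb_Ar r).
have hC := cb_le _ _ _ (cbC _) (hbeta i kk (leq_trans kkk kn)).
have hD := IH (k - kk)%N (leq_trans (leq_subr _ _) kn).
set a := M i ^+ (k - kk) in hA *; set b := (\prod_(j <- r) M j) ^+ kk in hB *.
set c := v kk`!%:R * beta i in hC *.
set d := v (k - kk)`!%:R * \prod_(j <- r) beta j * (\prod_(j <- r) M j) ^+ (k - kk) in hD *.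
have a0 : 0 <= a by apply: exprn_ge0; apply: M_ge0.
have b0 : 0 <= b by apply: exprn_ge0.
have c0 : 0 <= c by apply: mulr_ge0; [apply: vge0 | apply: beta_ge0].
have d0 : 0 <= d by apply: mulr_ge0; [apply: mulr_ge0; [apply: vge0 |] | apply: exprn_ge0].
have H1 := cbM _ _ _ _ a0 b0 hA hB.
have H2 := cbM _ _ _ _ (mulr_ge0 a0 b0) c0 H1 hC.
have H3 := cbM _ _ _ _ (mulr_ge0 (mulr_ge0 a0 b0) c0) d0 H2 hD.
have H := cbZ _ _ ('C(k, kk)%:R) H3.
apply: cb_le H _.
rewrite !big_cons -(bin_fact kkk) !natrM !vM exprMn.
have -> : M i ^+ k = a * M i ^+ kk by rewrite /a -exprD subnK.
have -> : (\prod_(j <- r) M j) ^+ k = b * (\prod_(j <- r) M j) ^+ (k - kk) by rewrite /b -exprD subnKC.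
rewrite /c /d.
set x := v 'C(k, kk)%:R.
have x0 : 0 <= x by apply: vge0.
set y := M i ^+ kk.
have y1 : 1 <= y by apply: exprn_ege1; apply: M_ge1.
set LHS := (X in X <= _).
have L0 : 0 <= LHS by rewrite /LHS; apply: mulr_ge0 => //; apply: mulr_ge0 => //; apply: mulr_ge0 => //; apply: mulr_ge0.
apply: le_trans (ler_peMr L0 y1) _.
rewrite /LHS le_eqVlt; apply/orP; left; apply/eqP; ring.
Qed.

End Val.


Section Lag.
Variables (K : fieldType) (m : nat) (alpha : 'I_m -> K).
Hypothesis inj : injective alpha.
Local Notation Ar := (@Ar K m alpha).
Local Notation Br := (@Br K m alpha).
Definition one_w : 'I_m -> K := fun _ => 1.

Lemma Ar_cons i r : Ar (i :: r) = ('X - (alpha i)%:P) * Ar r.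
Proof. by rewrite /Ar big_cons. Qed.

Lemma Ar_root r j : j \in r -> (Ar r).[alpha j] = 0.
Proof.
elim: r => [//|i r IH]; rewrite in_cons Ar_cons hornerM hornerXsubC => /orP[/eqP->|/IH->].
  by rewrite subrr mul0r.
by rewrite mulr0.
Qed.

Lemma Ar_nz r j : j \notin r -> (Ar r).[alpha j] != 0.
Proof.
elim: r => [|i r IH]; first by rewrite /Ar big_nil hornerC oner_neq0.
rewrite in_cons negb_or Ar_cons hornerM hornerXsubC => /andP[ji /IH h].
rewrite mulf_neq0 // subr_eq0; apply: contra ji => /eqP/inj ->; by [].
Qed.

Lemma Ar_deriv r : (Ar r)^`() = Br one_w r.
Proof.
elim: r => [|i r IH]; first by rewrite /Ar big_nil /= -polyC1 derivC.
by rewrite Ar_cons derivM derivXsubC mul1r IH /= /one_w mul1r mulrC.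
Qed.

Lemma Br_eval w r j : uniq r -> j \in r -> (Br w r).[alpha j] = w j * (Br one_w r).[alpha j].
Proof.
elim: r => [//|i r IH] /= /andP[ir ur]; rewrite in_cons => /orP[/eqP->|jr].
  by rewrite !hornerD !hornerM !hornerXsubC subrr !mulr0 !addr0 !hornerC /one_w mul1r.
rewrite !hornerD !hornerM !Ar_root // !mulr0 !add0r IH //; ring.
Qed.

Lemma Br1_nz r j : uniq r -> j \in r -> (Br one_w r).[alpha j] != 0.
Proof.
elim: r => [//|i r IH] /= /andP[ir ur]; rewrite in_cons => /orP[/eqP->|jr].
  by rewrite !hornerD !hornerM !hornerXsubC subrr !mulr0 !addr0 hornerC /one_w mul1r Ar_nz.
rewrite !hornerD !hornerM Ar_root // mulr0 add0r hornerXsubC mulf_neq0 ?IH //.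
rewrite subr_eq0; apply/negP => /eqP/inj ji; move: ir; rewrite -ji jr; by [].
Qed.

Lemma size_Ar r : (size (Ar r) <= (size r).+1)%N.
Proof.
elim: r => [|i r IH]; first by rewrite /Ar big_nil size_poly1.
rewrite Ar_cons; apply: leq_trans (size_mul_leq _ _) _; rewrite size_XsubC /=; by [].
Qed.

Lemma size_Br w r : (size (Br w r) <= size r)%N.
Proof.
elim: r => [|i r IH] /=; first by rewrite size_poly0.
apply: leq_trans (size_add _ _) _; rewrite geq_max; apply/andP; split.
  rewrite mul_polyC; apply: leq_trans (size_scale_leq _ _) _; exact: size_Ar.
apply: leq_trans (size_mul_leq _ _) _; rewrite size_XsubC addn2 /=; by [].
Qed.

Lemma sizeIE : size (index_enum 'I_m) = m.
Proof. by rewrite [index_enum _]unlock -enumT size_enum_ord. Qed.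

Lemma lagrange (b : {poly K}) (w : 'I_m -> K) :
  (size b <= m)%N ->
  (forall j, b.[alpha j] = w j * (Ar (index_enum 'I_m))^`().[alpha j]) ->
  b = Br w (index_enum 'I_m).
Proof.
move=> sb hb; apply/eqP; rewrite -subr_eq0; apply/negPn/negP => nz.
have u : uniq (index_enum 'I_m) by apply: index_enum_uniq.
have := max_poly_roots nz (rs := map alpha (index_enum 'I_m)).
rewrite map_inj_uniq // u size_map.
have -> : all (root (b - Br w (index_enum 'I_m))) (map alpha (index_enum 'I_m)).
  apply/allP => x /mapP[j jr ->]; rewrite /root hornerD hornerN hb Ar_deriv (Br_eval w) //.
  by rewrite subrr.
move=> /(_ isT isT).
have sz : (size (b - Br w (index_enum 'I_m))%R <= m)%N.
  apply: leq_trans (size_add _ _) _; rewrite geq_max sb size_opp /=.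
  have := size_Br w (index_enum 'I_m); rewrite sizeIE; by [].
by rewrite sizeIE ltnNge sz.
Qed.

End Lag.

Lemma iter_Dba (K : fieldType) (a b : {poly K}) n l j : a != 0 -> (j <= n)%N ->
  iter j (Dba a b) (a ^+ n * 'X^l) = a ^+ (n - j) * Rr a b 'X^l n%:R j.
Proof.
move=> a0; elim: j => [|j IH] jn; first by rewrite subn0.
rewrite iterS IH ?(ltnW jn) // /Dba /=.
have e1 : (n - j)%N = (n - j.+1).+1 by rewrite subnSK.
have hn : (n%:R - j%:R : K) = (n - j.+1).+1%:R by rewrite -natrB ?(ltnW jn) // e1.
rewrite e1 hn; set e := (n - j.+1)%N; set P := Rr a b 'X^l n%:R j.
have -> : b * (a ^+ e.+1 * P) = (b * a ^+ e * P) * a by rewrite exprSr; ring.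
rewrite mulpK // derivM deriv_exp /= -mul_polyC polyC_natr.
rewrite -[a^`() * a ^+ e *+ e.+1]mulr_natr exprS.
ring.
Qed.

Lemma ln_prod (R : realType) (I : Type) (r : seq I) (f : I -> R) :
  (forall i, 0 < f i) -> ln (\prod_(i <- r) f i) = \sum_(i <- r) ln (f i).
Proof.
move=> hf; elim: r => [|i r IH]; first by rewrite !big_nil ln1.
rewrite !big_cons lnM ?IH // posrE //; apply: prodr_gt0 => j _; exact: hf.
Qed.

Lemma prod_ege1 (R : realType) (I : Type) (r : seq I) (P : pred I) (f : I -> R) :
  (forall i, P i -> 1 <= f i) -> 1 <= \prod_(i <- r | P i) f i.
Proof. by move=> h; elim/big_ind: _ => // x y; apply: mulr_ege1. Qed.

Theorem lemma4p7 (K : fieldExtType rat) (R : realType) (m : nat) (a b : {poly K})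
  (alpha : 'I_m -> K) (s : 'I_m -> rat) (v : K -> R) (n : nat) :
  (2 <= m)%N ->
  a \is monic -> size a = m.+1 ->
  (size b <= m)%N ->
  a = \prod_(i < m) ('X - (alpha i)%:P) ->
  injective alpha ->
  (forall i, b.[alpha i] / a^`().[alpha i] = ratr (s i)) ->
  (forall i (k : nat), s i != - (k.+1)%:R) ->
  (forall k : nat, b`_m.-1 != - (k.+2)%:R) ->
  nonarch_abs v ->
  (0 < n)%N ->
  ln (\big[Num.max/0]_(l < m.+1) normv v (Pnl a b n l))
    <= \sum_(i < m) (ln ((v (mu n (s i))%:R)^-1) + n%:R * hv v (alpha i)).
Proof.
move=> _ amon _ sb ha inj hs _ _ Hv n0.
have ratrE : forall q : rat, ratr q = in_alg K q.
  move=> q; rewrite /ratr -{3}[q]divq_num_den fmorph_div /= -!in_algE !rmorph_int; by [].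
have nat_nz : forall k, (0 < k)%N -> (k%:R : K) != 0.
  move=> k k0; rewrite -(rmorph_nat (in_alg K)) fmorph_eq0 pnatr_eq0 -lt0n //.
pose sK i : K := ratr (s i).
pose beta i := (v (mu n (s i))%:R)^-1.
have mu_gt0 : forall i, (0 < mu n (s i))%N.
  move=> i; rewrite /mu muln_gt0 expn_gt0 absz_gt0 gt_eqF ?denq_gt0 //=.
  rewrite big_seq; elim/big_ind: _ => // [x y|q]; [by rewrite muln_gt0 => -> -> | by rewrite mem_primes => /and3P[qp _ _]; rewrite expn_gt0 prime_gt0].
have vmu : forall i, 0 < v (mu n (s i))%:R.
  by move=> i; apply: (vgt0 _ _ _ Hv); apply: nat_nz.
have beta_ge0 : forall i, 0 <= beta i by move=> i; rewrite invr_ge0 ltW.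
have beta_gt0 : forall i, 0 < beta i by move=> i; rewrite invr_gt0.
have beta_ge1 : forall i, 1 <= beta i.
  by move=> i; rewrite /beta invf_ge1 ?vmu // (vnat _ _ _ Hv).
have hbeta : forall i k, (k <= n)%N ->
    v (\prod_(t < k) (n%:R - t%:R + sK i)) <= v (k`!%:R) * beta i.
  move=> i k kn; have [z hz] := mu_binom (s i) n k kn.
  have := congr1 (in_alg K) hz; rewrite rmorphM [in X in _ = X -> _]rmorphM /= -!in_algE rmorph_prod !rmorph_nat rmorph_int.
  rewrite (eq_bigr (fun t : 'I_k => n%:R - t%:R + sK i)); last first.
    by move=> t _; rewrite rmorphB rmorphD /= -!in_algE !rmorph_nat /sK ratrE addrAC.
  move=> /(congr1 v); rewrite !(vM _ _ _ Hv) => hv'.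
  rewrite /beta ler_pdivlMr // mulrC hv'.
  by rewrite ger_pMr ?(vint _ _ _ Hv) // (vgt0 _ _ _ Hv) // nat_nz // fact_gt0.
have a0 : a != 0 by apply: monic_neq0.
have haA : a = Ar _ _ alpha (index_enum 'I_m) := ha.
have hb : b = Br _ _ alpha sK (index_enum 'I_m).
  apply: lagrange => // j.
  have nz : (Ar _ _ alpha (index_enum 'I_m))^`().[alpha j] != 0.
    rewrite Ar_deriv; apply: Br1_nz => //; first [exact (index_enum_uniq _) | exact (mem_index_enum j)].
  rewrite -haA in nz *; have := hs j.
  by move/(congr1 (fun x => x * a^`().[alpha j])); rewrite divfK.
pose Mi i := M _ _ v _ alpha i.
pose C := \prod_(i <- index_enum 'I_m) beta i * (\prod_(i <- index_enum 'I_m) Mi i) ^+ n.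
have C1 : 1 <= C.
  rewrite /C; apply: mulr_ege1; first by apply: prod_ege1 => i _; apply: beta_ge1.
  by apply: exprn_ege1; apply: prod_ege1 => i _; apply: M_ge1.
have hl : forall l, normv v (Pnl a b n l) <= C.
  move=> l; rewrite /Pnl iter_Dba // subnn expr0 mul1r.
  have hm := main_bound _ _ _ Hv _ alpha sK beta n beta_ge0 hbeta l (index_enum 'I_m) n (leqnn n).
  rewrite -haA -hb in hm.
  have nf : (n`!%:R : K) != 0 by apply: nat_nz; apply: fact_gt0.
  have hZ := cbZ _ _ _ Hv _ _ ((n`!%:R)^-1) hm.
  rewrite (vV _ _ _ Hv) // !mulrA mulVf ?mul1r in hZ; last by rewrite gt_eqF // (vgt0 _ _ _ Hv).
  rewrite /normv; elim/big_ind: _ => //; first by apply: le_trans ler01 C1.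
    by move=> x y hx hy; rewrite ge_max hx hy.
set X := \big[Num.max/0]_(l < m.+1) normv v (Pnl a b n l).
have XC : X <= C.
  rewrite /X; apply: (big_ind (fun x => x <= C)); first by apply: le_trans ler01 C1.
    by move=> x y hx hy; rewrite ge_max hx hy.
  by move=> l _; apply: hl.
have RHS : ln C = \sum_(i < m) (ln ((v (mu n (s i))%:R)^-1) + n%:R * hv v (alpha i)).
  rewrite /C lnM ?posrE; last first.
      by apply: exprn_gt0; apply: prodr_gt0 => i _; apply: lt_le_trans ltr01 (M_ge1 _ _ _ _ _ _).
    by apply: prodr_gt0 => i _; apply: beta_gt0.
  rewrite lnXn; last by apply: prodr_gt0 => i _; apply: lt_le_trans ltr01 (M_ge1 _ _ _ _ _ _).
  rewrite !ln_prod //; last by move=> i; apply: lt_le_trans ltr01 (M_ge1 _ _ _ _ _ _).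
  rewrite big_split /=; congr (_ + _); rewrite -sumrMnl; apply: eq_bigr => i _; by rewrite mulr_natl.
rewrite -RHS.
have [X0|X0] := leP X 0; first by rewrite ln0 // ln_ge0.
by rewrite ler_ln // posrE // (lt_le_trans ltr01 C1).
Qed.
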